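(* Let $\Omega\subset\mathbb{R}^d$ be a convex polygonal domain, $\mathrm{Wi}>0$, and let $\vec u:\Omega\times[0,T]\to\mathbb{R}^d$ be a given, sufficiently smooth velocity field with $\vec u\cdot\vec n=0$ on $\partial\Omega$, and $\Delta t=T/N$ with $\Delta t\,\|\vec u\|_{C^0([0,T];W^{1,\infty}(\Omega))}<1$; write $t^n=n\Delta t$. Let $\boldsymbol\sigma$ be a sufficiently smooth solution of the Oldroyd-B constitutive law $$\partial_t\boldsymbol\sigma+(\vec u\cdot\nabla)\boldsymbol\sigma-(\nabla\vec u)\boldsymbol\sigma-\boldsymbol\sigma(\nabla\vec u)^T=-\tfrac{1}{\mathrm{Wi}}(\boldsymbol\sigma-\vec I).$$ For $t\in[\Delta t,T]$ set $\vec y^t_{\Delta t}(\vec x)=\vec x-\Delta t\,\vec u(\vec x,t)$, $\vec F^t_{\Delta t}(\vec x)=\vec I+\Delta t\,\nabla\vec u(\vec x,t)$, and for a tensor field $\vec\zeta$ define $$D_{(\vec u,\Delta t)}\vec\zeta(\vec x,t)=\tfrac{1}{\Delta t}\big(\vec\zeta(\vec x,t)-\vec F^t_{\Delta t}(\vec x)\,\vec\zeta(\vec y^t_{\Delta t}(\vec x),t-\Delta t)\,\vec F^t_{\Delta t}(\vec x)^T\big).$$ Consider the semidiscrete scheme: $\vec\Sigma^0=\boldsymbol\sigma^0$ and, for $n\ge1$ (with $t=t^n$), $$\tfrac{1}{\Delta t}\big(\vec\Sigma^n(\vec x)-\vec F^{t}_{\Delta t}(\vec x)\vec\Sigma^{n-1}(\vec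 y^{t}_{\Delta t}(\vec x))\vec F^{t}_{\Delta t}(\vec x)^T\big)=-\tfrac{1}{\mathrm{Wi}}(\vec\Sigma^n(\vec x)-\vec I).$$ Then this semidiscrete scheme is a consistent, first order approximation, in the sense that its local truncation error is $\mathcal{O}(\Delta t^2)$: if one step of the scheme is performed at time $t=t^n$ starting from the exact value $\boldsymbol\sigma(\cdot,t-\Delta t)$ in place of $\vec\Sigma^{n-1}$, the resulting $\vec\Sigma^n$ satisfies $\boldsymbol\sigma(\vec x,t)-\vec\Sigma^n(\vec x)=\mathcal{O}(\Delta t^2)$.
   Context: $(\nabla\vec u)_{ij}=\partial u_i/\partial x_j$; $\vec I$ is the identity tensor; $\mathrm{Wi}$ is the Weissenberg number. *)

(* Defs.v *)
From HB Require Import structures.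
From mathcomp Require Import all_boot all_order all_algebra.
From mathcomp Require Import all_classical all_reals all_analysis.
Set Implicit Arguments. Unset Strict Implicit. Unset Printing Implicit Defensive.
Import Order.TTheory GRing.Theory Num.Theory.
Import numFieldNormedType.Exports.
Local Open Scope classical_set_scope.
Local Open Scope ring_scope.

Section Defs.
Variable R : realType.
Variable d : nat.

Definition pt := 'rV[R]_d.
Definition spt := ('rV[R]_d * R)%type.

Definition dotv (a x : 'rV[R]_d) : R := \sum_(i < d) a 0 i * x 0 i.

Definition polyhedron (m : nat) (a : 'I_m -> 'rV[R]_d) (b : 'I_m -> R)
  : set 'rV[R]_d := [set x | forall i, dotv (a i) x < b i].

Definition cpolyhedron (m : nat) (a : 'I_m -> 'rV[R]_d) (b : 'I_m -> R)
  : set 'rV[R]_d := [set x | forall i, dotv (a i) x <= b i].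

Definition convex_polygonal_domain (m : nat) (a : 'I_m -> 'rV[R]_d)
  (b : 'I_m -> R) : Prop :=
  (polyhedron a b !=set0) /\
  (exists r : R, forall x, polyhedron a b x -> `|x| <= r).

(* Twice continuously differentiable, via directional derivatives:
   all first and second directional derivatives exist everywhere and the
   second ones are continuous (this implies C^2). *)
Definition C2 (V W : normedModType R) (f : V -> W) : Prop :=
  forall v w : V,
    (forall x, derivable f x v) /\
    (forall x, derivable ('D_v f) x w) /\
    continuous ('D_w ('D_v f)).

Definition evec (j : 'I_d) : 'rV[R]_d := delta_mx 0 j.

Definition dx (W : normedModType R) (j : 'I_d) (f : spt -> W) : spt -> W :=
  'D_((evec j, 0) : spt) f.
Definition dt (W : normedModType R) (f : spt -> W) : spt -> W :=
  'D_((0, 1) : spt) f.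

Definition gradu (u : spt -> 'rV[R]_d) (p : spt) : 'M[R]_d :=
  \matrix_(i < d, j < d) (dx j u p) 0 i.

Definition advect (u : spt -> 'rV[R]_d) (s : spt -> 'M[R]_d) (p : spt)
  : 'M[R]_d := \sum_(j < d) (u p) 0 j *: dx j s p.

Definition oldroydB (Wi : R) (u : spt -> 'rV[R]_d) (s : spt -> 'M[R]_d)
  (p : spt) : Prop :=
  dt s p + advect u s p - gradu u p *m s p - s p *m (gradu u p)^T
  = - Wi^-1 *: (s p - 1%:M).

Definition yfoot (u : spt -> 'rV[R]_d) (Dt t : R) (x : 'rV[R]_d) : 'rV[R]_d :=
  x - Dt *: u (x, t).
Definition Fdef (u : spt -> 'rV[R]_d) (Dt t : R) (x : 'rV[R]_d) : 'M[R]_d :=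
  1%:M + Dt *: gradu u (x, t).

Definition scheme_step (Wi : R) (u : spt -> 'rV[R]_d) (Dt t : R)
  (Sprev S : 'rV[R]_d -> 'M[R]_d) (x : 'rV[R]_d) : Prop :=
  Dt^-1 *: (S x - Fdef u Dt t x *m Sprev (yfoot u Dt t x) *m (Fdef u Dt t x)^T)
  = - Wi^-1 *: (S x - 1%:M).

End Defs.

(* Main.v *)
Require Import Defs.
From HB Require Import structures.
From mathcomp Require Import all_boot all_order all_algebra.
From mathcomp Require Import all_classical all_reals all_analysis.
Import Order.TTheory GRing.Theory Num.Theory.
Import numFieldNormedType.Exports.
Local Open Scope classical_set_scope.
Local Open Scope ring_scope.

From mathcomp Require Import ring lra.
Set Implicit Arguments. Unset Strict Implicit. Unset Printing Implicit Defensive.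

Section Gen.
Variables (R : realType) (V : normedModType R).

Lemma slice_eq (f : V -> R) (z b : V) (s : R) :
  (fun h : R => h^-1 *: (((fun r : R => f (z + r *: b)) \o shift s) (h *: 1)
     - (fun r : R => f (z + r *: b)) s)) =
  (fun h : R => h^-1 *: ((f \o shift (z + s *: b)) (h *: b) - f (z + s *: b))).
Proof.
apply/funext => h /=; congr (_ *: (f _ - _)).
by rewrite /shift /= [_%:A]mulr1 scalerDl addrCA addrC.
Qed.

Lemma slice_derivable (f : V -> R) (z b : V) (s : R) :
  derivable f (z + s *: b) b -> derivable (fun r : R => f (z + r *: b)) s 1.
Proof. by rewrite /derivable slice_eq. Qed.

Lemma slice_derive (f : V -> R) (z b : V) (s : R) :
  'D_1 (fun r : R => f (z + r *: b)) s = 'D_b f (z + s *: b).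
Proof. by rewrite /derive slice_eq. Qed.


Lemma mvt_dir (f : V -> R) (z b : V) (c : R) :
  (forall s, `|s| <= `|c| -> derivable f (z + s *: b) b) ->
  exists s, `|s| <= `|c| /\ f (z + c *: b) - f z = c * 'D_b f (z + s *: b).
Proof.
move=> H.
pose g := fun r : R => f (z + r *: b).
pose df := fun r : R => 'D_b f (z + r *: b).
have dg : forall r : R, `|r| <= `|c| -> is_derive (r : R) (1 : R) g (df r).
  move=> r hr; apply: DeriveDef; first exact: slice_derivable (H r hr).
  exact: slice_derive.
have g0 : g 0 = f z by rewrite /g scale0r addr0.
case: (leP 0 c) => c0.
- have [||xi xi_in eq] := @MVT_segment R g df 0 c c0.
  + move=> x; rewrite in_itv /= => /andP[x0 xc]; apply: dg.
    by rewrite !ger0_norm // ?ltW // (le_trans (ltW x0) (ltW xc)).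
  + apply: derivable_within_continuous => x; rewrite in_itv /= => /andP[x0 xc].
    by apply: (dg x _).(ex_derive); rewrite !ger0_norm // (le_trans x0 xc).
  exists xi; split.
    move: xi_in; rewrite in_itv /= => /andP[x0 xc].
    by rewrite !ger0_norm // (le_trans x0 xc).
  by move: eq; rewrite g0 subr0 mulrC.
- have [||xi xi_in eq] := @MVT_segment R g df c 0 (ltW c0).
  + move=> x; rewrite in_itv /= => /andP[x0 xc]; apply: dg.
    by rewrite !ltr0_norm // ?lerN2 ?ltW // (lt_trans x0 xc).
  + apply: derivable_within_continuous => x; rewrite in_itv /= => /andP[x0 xc].
    apply: (dg x _).(ex_derive).
    by rewrite (ltr0_norm c0) ler0_norm ?lerN2.
  exists xi; split.
    move: xi_in; rewrite in_itv /= => /andP[x0 xc].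
    by rewrite (ltr0_norm c0) ler0_norm ?lerN2.
  move: eq; rewrite g0 sub0r => eq.
  by rewrite -[LHS]opprB eq mulrN opprK mulrC.
Qed.


Lemma norm_sub_shift (z q : V) (l : R) (w : V) :
  `|z - q| <= `|z - (q + l *: w)| + `|l| * `|w|.
Proof.
have -> : z - q = (z - (q + l *: w)) + l *: w by rewrite opprD addrA subrK.
by rewrite -normrZ ler_normD.
Qed.

Lemma norm_shift (q : V) (l : R) (w : V) : `|q + l *: w - q| = `|l| * `|w|.
Proof. by rewrite [q + _]addrC addrK normrZ. Qed.

Lemma tel1 (I : Type) (f : V -> R) (e : I -> V) (c : I -> R) (B : R)
  (s : seq I) :
  (forall i, `|e i| <= 1) ->
  forall (q : V) (r : R), \sum_(i <- s) `|c i| <= r ->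
  (forall z i, `|z - q| <= r -> derivable f z (e i) /\ `|'D_(e i) f z| <= B) ->
  `|f (q + \sum_(i <- s) c i *: e i) - f q| <= B * \sum_(i <- s) `|c i|.
Proof.
move=> he; elim: s => [|i s IH] q r hr H.
  by rewrite !big_nil addr0 subrr normr0 mulr0.
rewrite !big_cons in hr *.
set q' := q + c i *: e i.
have S0 : 0 <= \sum_(j <- s) `|c j| by apply: sumr_ge0.
have hei := he i.
have hci0 : 0 <= `|c i| by [].
have hci : `|c i| <= r by lra.
have hsum : \sum_(j <- s) `|c j| <= r - `|c i| by lra.
have H' : forall z j, `|z - q'| <= r - `|c i| ->
    derivable f z (e j) /\ `|'D_(e j) f z| <= B.
  move=> z j hz; apply: H; apply: le_trans (norm_sub_shift z q (c i) (e i)) _.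
  have : `|c i| * `|e i| <= `|c i| by rewrite ler_piMr.
  lra.
have := IH q' (r - `|c i|) hsum H'.
rewrite addrA -/q' => h1.
have hz : forall s0, `|s0| <= `|c i| -> `|q + s0 *: e i - q| <= r.
  move=> s0 hs0; rewrite norm_shift.
  have : `|s0| * `|e i| <= `|s0| by rewrite ler_piMr.
  lra.
have [xi [hxi eq]] := mvt_dir (f:=f) (z:=q) (b:=e i) (c:=c i)
   (fun s0 hs0 => (H (q + s0 *: e i) i (hz s0 hs0)).1).
have hD := (H (q + xi *: e i) i (hz xi hxi)).2.
have h2 : `|f q' - f q| <= `|c i| * B.
  by rewrite eq normrM ler_wpM2l.
have -> : f (q' + \sum_(j <- s) c j *: e j) - f q =
  (f (q' + \sum_(j <- s) c j *: e j) - f q') + (f q' - f q) by rewrite addrA subrK.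
apply: le_trans (ler_normD _ _) _.
lra.
Qed.


Lemma tel2 (I : Type) (f : V -> R) (e : I -> V) (c : I -> R) (B : R)
  (s : seq I) :
  (forall i, `|e i| <= 1) ->
  forall (q : V) (r : R), \sum_(i <- s) `|c i| <= r ->
  (forall z i j, `|z - q| <= r -> derivable f z (e i) /\
      derivable ('D_(e i) f) z (e j) /\ `|'D_(e j) ('D_(e i) f) z| <= B) ->
  `|f (q + \sum_(i <- s) c i *: e i) - f q - \sum_(i <- s) c i * 'D_(e i) f q|
    <= B * (\sum_(i <- s) `|c i|) ^+ 2.
Proof.
move=> he; elim: s => [|i s IH] q r hr H.
  by rewrite !big_nil addr0 subrr subr0 normr0 expr2 !mulr0.
rewrite !big_cons in hr *.
set q' := q + c i *: e i.
have S0 : 0 <= \sum_(j <- s) `|c j| by apply: sumr_ge0.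
have hei := he i.
have hci0 : 0 <= `|c i| by [].
have hci : `|c i| <= r by lra.
have hsum : \sum_(j <- s) `|c j| <= r - `|c i| by lra.
have B0 : 0 <= B.
  have hq : `|q - q| <= r by rewrite subrr normr0; lra.
  exact: le_trans (normr_ge0 _) (H q i i hq).2.2.
have H' : forall z j k, `|z - q'| <= r - `|c i| -> derivable f z (e j) /\
      derivable ('D_(e j) f) z (e k) /\ `|'D_(e k) ('D_(e j) f) z| <= B.
  move=> z j k hz; apply: H; apply: le_trans (norm_sub_shift z q (c i) (e i)) _.
  have : `|c i| * `|e i| <= `|c i| by rewrite ler_piMr.
  lra.
have := IH q' (r - `|c i|) hsum H'.
rewrite addrA -/q' => h1.
have hz : forall s0, `|s0| <= `|c i| -> `|q + s0 *: e i - q| <= r.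
  move=> s0 hs0; rewrite norm_shift.
  have : `|s0| * `|e i| <= `|s0| by rewrite ler_piMr.
  lra.
have h2 : `|\sum_(j <- s) c j * ('D_(e j) f q' - 'D_(e j) f q)| <= (\sum_(j <- s) `|c j|) * (`|c i| * B).
  apply: le_trans (ler_norm_sum _ _ _) _.
  rewrite big_distrl /=; apply: ler_sum => j _; rewrite normrM ler_wpM2l //.
  have [xi [hxi eq]] := mvt_dir (f:='D_(e j) f) (z:=q) (b:=e i) (c:=c i)
     (fun s0 hs0 => (H (q + s0 *: e i) j i (hz s0 hs0)).2.1).
  have hD := (H (q + xi *: e i) j i (hz xi hxi)).2.2.
  by rewrite eq normrM ler_wpM2l.
have h3 : `|f q' - f q - c i * 'D_(e i) f q| <= `|c i| ^+ 2 * B.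
  have [xi [hxi eq]] := mvt_dir (f:=f) (z:=q) (b:=e i) (c:=c i)
     (fun s0 hs0 => (H (q + s0 *: e i) i i (hz s0 hs0)).1).
  have hz' : forall s1, `|s1| <= `|xi| -> `|q + s1 *: e i - q| <= r.
    by move=> s1 hs1; apply: hz; apply: le_trans hs1 hxi.
  have [xi' [hxi' eq']] := mvt_dir (f:='D_(e i) f) (z:=q) (b:=e i) (c:=xi)
     (fun s1 hs1 => (H (q + s1 *: e i) i i (hz' s1 hs1)).2.1).
  have hD := (H (q + xi' *: e i) i i (hz' xi' hxi')).2.2.
  rewrite /q' eq -mulrBr eq' !normrM expr2 -mulrA ler_wpM2l //.
  apply: le_trans (ler_wpM2l (normr_ge0 _) hD) _.
  by rewrite ler_wpM2r.
have split : \sum_(j <- s) c j * ('D_(e j) f q' - 'D_(e j) f q) =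
    \sum_(j <- s) c j * 'D_(e j) f q' - \sum_(j <- s) c j * 'D_(e j) f q.
  by rewrite -sumrB; apply: eq_bigr => j _; rewrite mulrBr.
have -> : f (q' + \sum_(j <- s) c j *: e j) - f q -
    (c i * 'D_(e i) f q + \sum_(j <- s) c j * 'D_(e j) f q) =
  (f (q' + \sum_(j <- s) c j *: e j) - f q' - \sum_(j <- s) c j * 'D_(e j) f q')
  + \sum_(j <- s) c j * ('D_(e j) f q' - 'D_(e j) f q)
  + (f q' - f q - c i * 'D_(e i) f q).
  by rewrite split; ring.
apply: le_trans (ler_normD _ _) _.
apply: le_trans (lerD (ler_normD _ _) (lexx _)) _.
have hBS : 0 <= B * `|c i| * \sum_(j <- s) `|c j| by rewrite !mulr_ge0.
nra.
Qed.

End Gen.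

Section Basis.
Variables (R : realType) (d : nat).

Definition eb (l : 'I_d.+1) : spt R d :=
  match unlift ord_max l with Some j => (evec R j, 0) | None => (0, 1) end.
Definition crd (l : 'I_d.+1) (q : spt R d) : R :=
  match unlift ord_max l with Some j => q.1 0 j | None => q.2 end.

Lemma sum_split (W : nmodType) (F : 'I_d.+1 -> W) :
  \sum_l F l = \sum_(j < d) F (lift ord_max j) + F ord_max.
Proof.
rewrite big_ord_recr /=; congr (_ + _); apply: eq_bigr => j _; congr F.
apply: val_inj; exact: (esym (lift_max j)).
Qed.

Lemma eb_lift j : eb (lift ord_max j) = (evec R j, 0).
Proof. by rewrite /eb liftK. Qed.
Lemma eb_max : eb ord_max = (0, 1).
Proof. by rewrite /eb unlift_none. Qed.
Lemma crd_lift j q : crd (lift ord_max j) q = q.1 0 j.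
Proof. by rewrite /crd liftK. Qed.
Lemma crd_max q : crd ord_max q = q.2.
Proof. by rewrite /crd unlift_none. Qed.

Lemma entry_le_norm m n (A : 'M[R]_(m, n)) i j : `|A i j| <= `|A|.
Proof.
rewrite [leRHS]/Num.Def.normr /= mx_normrE.
exact: (le_bigmax 0 (fun ij : 'I_m * 'I_n => `|A ij.1 ij.2|) (i, j)).
Qed.

Lemma norm_le_entries m n (A : 'M[R]_(m, n)) (B : R) :
  0 <= B -> (forall i j, `|A i j| <= B) -> `|A| <= B.
Proof.
move=> B0 H; rewrite [leLHS]/Num.Def.normr /= mx_normrE.
by apply: bigmax_le => // -[i j] _; apply: H.
Qed.

Lemma eb_norm l : `|eb l| <= 1.
Proof.
rewrite /eb; case: (unlift ord_max l) => [j|]; rewrite prod_normE ge_max /=.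
  apply/andP; split; last by rewrite normr0.
  apply: norm_le_entries => // i k; rewrite mxE.
  by case: (_ && _); rewrite ?normr1 ?normr0.
by rewrite normr0 normr1 ler01 lexx.
Qed.

Lemma crd_norm l q : `|crd l q| <= `|q|.
Proof.
rewrite /crd prod_normE; case: (unlift ord_max l) => [j|]; rewrite le_max.
  by rewrite (entry_le_norm q.1 0 j).
by rewrite lexx orbT.
Qed.

Lemma fst_sum (I : Type) (r : seq I) (F : I -> spt R d) :
  (\sum_(i <- r) F i).1 = \sum_(i <- r) (F i).1.
Proof. by elim: r => [|x r IH]; rewrite ?big_nil ?big_cons //= IH. Qed.
Lemma snd_sum (I : Type) (r : seq I) (F : I -> spt R d) :
  (\sum_(i <- r) F i).2 = \sum_(i <- r) (F i).2.
Proof. by elim: r => [|x r IH]; rewrite ?big_nil ?big_cons //= IH. Qed.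

Lemma decomp (q : spt R d) : q = \sum_l crd l q *: eb l.
Proof.
case: q => v t; rewrite [RHS]surjective_pairing fst_sum snd_sum !sum_split.
rewrite !crd_max !eb_max /= scaler0 addr0.
congr pair.
  apply/rowP => k; rewrite summxE (bigD1 k) //= big1 ?addr0.
    by rewrite crd_lift eb_lift !mxE /= eqxx mulr1.
  by move=> j /negbTE jk; rewrite crd_lift eb_lift !mxE /= eq_sym jk mulr0.
rewrite big1 ?add0r; first by rewrite [_%:A]mulr1.
by move=> j _; rewrite eb_lift /= scaler0.
Qed.

End Basis.

Section Bounds.
Variables (R : realType) (d : nat).
Local Notation eb := (@eb R d).

Lemma fin_bound (I : finType) (P : I -> R -> Prop) :
  (forall i B B', B <= B' -> P i B -> P i B') ->
  (forall i, exists B, P i B) -> exists B, 0 <= B /\ forall i, P i B.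
Proof.
move=> mono H; have [f hf] := choice H.
exists (Num.max 0 (\big[Num.max/0]_i f i)); split; first by rewrite le_max lexx.
move=> i; apply: mono (hf i).
rewrite le_max; apply/orP; right; exact: le_bigmax.
Qed.

Lemma cont_bound (W : normedModType R) (h : spt R d -> W) (rho : R) :
  continuous h -> exists B, forall q, `|q| <= rho -> `|h q| <= B.
Proof.
move=> hc.
pose K : set (spt R d) :=
  [set v : 'rV[R]_d | forall i, `[- rho, rho]%classic (v ord0 i)] `*`
  `[- rho, rho]%classic.
have cK : compact K.
  apply: compact_setX; last exact: segment_compact.
  apply: (@rV_compact _ _ (fun=> `[- rho, rho]%classic)) => _.
  exact: segment_compact.
have /ex_strict_bound_gt0[k k0 /= Hk] : bounded_set (h @` K).
  exact/compact_bounded/continuous_compact/cK/continuous_subspaceT.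
exists k => q hq; apply/ltW/Hk; exists q => //; split.
  move=> i /=; rewrite in_itv /= -ler_norml.
  apply: le_trans hq; apply: le_trans (entry_le_norm q.1 ord0 i) _.
  by rewrite prod_normE le_max lexx.
rewrite /= in_itv /= -ler_norml; apply: le_trans hq.
by rewrite prod_normE le_max lexx orbT.
Qed.


Section Mx.
Variables (m n : nat).

Lemma derivable_entry (h : spt R d -> 'M[R]_(m, n)) x v a b :
  derivable h x v -> derivable (fun z => h z a b) x v.
Proof. by move=> H; apply: ((derivable_mxP h x v).1 H a b). Qed.

Lemma derive_entry (h : spt R d -> 'M[R]_(m, n)) x v a b :
  derivable h x v -> 'D_v (fun z => h z a b) x = ('D_v h x) a b.
Proof. by move=> H; rewrite (derive_mx H) mxE. Qed.

Lemma lift_bound (h : spt R d -> 'M[R]_(m, n)) :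
  (forall x l, derivable h x (eb l)) ->
  (forall rho, exists B, 0 <= B /\ forall l a b q, `|q| <= rho ->
      `|('D_(eb l) h q) a b| <= B) ->
  forall rho, exists B, 0 <= B /\ forall a b q, `|q| <= rho -> `|h q a b| <= B.
Proof.
move=> hd hb rho.
pose r := (d.+1)%:R * Num.max rho 0.
have [B2 [B20 hB2]] := hb r.
have [B [B0 HB]] : exists B, 0 <= B /\ forall i : ('I_m * 'I_n)%type,
    forall q, `|q| <= rho -> `|h q i.1 i.2| <= B.
  apply: fin_bound; first by move=> i B B' BB' H q hq; apply: le_trans (H q hq) BB'.
  move=> [a b] /=; exists (`|h 0 a b| + B2 * r) => q hq.
  have hs : \sum_(l <- index_enum 'I_d.+1) `|crd l q| <= r.
    apply: le_trans (ler_sum _ (fun l _ => crd_norm l q)) _.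
    rewrite sumr_const card_ord -mulr_natl; apply: ler_wpM2l => //.
    by rewrite le_max hq.
  have := @tel1 R _ _ (fun z => h z a b) eb (fun l => crd l q) B2
    (index_enum 'I_d.+1) (@eb_norm R d) 0 r hs.
  rewrite add0r -decomp => H.
  have {}H : `|h q a b - h 0 a b| <= B2 * \sum_(l <- index_enum 'I_d.+1) `|crd l q|.
    apply: H => z l hz; split; first exact: derivable_entry.
    by rewrite derive_entry //; apply: hB2; rewrite subr0 in hz.
  have := ler_normD (h q a b - h 0 a b) (h 0 a b); rewrite subrK.
  have := ler_wpM2l B20 hs.
  lra.
by exists B; split => // a b q hq; apply: (HB (a, b)).
Qed.

Lemma all_bounds (g : spt R d -> 'M[R]_(m, n)) : C2 g ->
  forall rho, exists B, 0 <= B /\ forall q, `|q| <= rho -> forall k l a b,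
    `|g q a b| <= B /\ `|('D_(eb k) g q) a b| <= B /\
    `|('D_(eb l) ('D_(eb k) g) q) a b| <= B.
Proof.
move=> hC.
have b2 : forall rho, exists B, 0 <= B /\ forall k l a b q, `|q| <= rho ->
    `|('D_(eb l) ('D_(eb k) g) q) a b| <= B.
  move=> rho.
  have [B [B0 HB]] : exists B, 0 <= B /\ forall i : ('I_d.+1 * 'I_d.+1)%type,
      forall q, `|q| <= rho -> `|'D_(eb i.2) ('D_(eb i.1) g) q| <= B.
    apply: fin_bound; first by move=> i B B' BB' H q hq; apply: le_trans (H q hq) BB'.
    move=> [k l] /=; apply: cont_bound.
    exact: (hC (eb k) (eb l)).2.2.
  exists B; split => // k l a b q hq.
  exact: le_trans (entry_le_norm _ _ _) (HB (k, l) q hq).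
have b1 : forall rho, exists B, 0 <= B /\ forall k a b q, `|q| <= rho ->
    `|('D_(eb k) g q) a b| <= B.
  move=> rho.
  have [B [B0 HB]] : exists B, 0 <= B /\ forall k : 'I_d.+1,
      forall a b q, `|q| <= rho -> `|('D_(eb k) g q) a b| <= B.
    apply: fin_bound; first by move=> i B B' BB' H a b q hq; apply: le_trans (H a b q hq) BB'.
    move=> k.
    have hd : forall x l, derivable ('D_(eb k) g) x (eb l).
      by move=> x l; exact: (hC (eb k) (eb l)).2.1.
    have hb : forall rho', exists B, 0 <= B /\ forall l a b q, `|q| <= rho' ->
        `|('D_(eb l) ('D_(eb k) g) q) a b| <= B.
      move=> rho'; have [B [B0 HB]] := b2 rho'.
      by exists B; split => // l a b q hq; apply: HB.
    have [B [B0 HB]] := @lift_bound ('D_(eb k) g) hd hb rho.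
    by exists B; exact: HB.
  by exists B; split => // k a b q hq; apply: HB.
have b0 := @lift_bound g (fun x l => (hC (eb l) (eb l)).1 x) b1.
move=> rho.
have [B0 [B00 HB0]] := b0 rho.
have [B1 [B10 HB1]] := b1 rho.
have [B2 [B20 HB2]] := b2 rho.
exists (B0 + B1 + B2); split; first lra.
move=> q hq k l a b.
have := HB0 a b q hq; have := HB1 k a b q hq; have := HB2 k l a b q hq.
lra.
Qed.

End Mx.

End Bounds.

Section Alg.
Variables (R : realType) (d : nat).

Lemma mul_norm k l (A : 'M[R]_(k, d)) (B : 'M[R]_(d, l)) :
  `|A *m B| <= d%:R * `|A| * `|B|.
Proof.
apply: norm_le_entries; first by rewrite !mulr_ge0.
move=> i j; rewrite mxE; apply: le_trans (ler_norm_sum _ _ _) _.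
under eq_bigr do rewrite normrM.
apply: le_trans (ler_sum _ (fun j' _ => ler_pM (normr_ge0 _) (normr_ge0 _)
   (entry_le_norm A i j') (entry_le_norm B j' j))) _.
by rewrite sumr_const card_ord -[_ *+ d]mulr_natl mulrA.
Qed.

Lemma FYF (G Y : 'M[R]_d) (D : R) :
  (1%:M + D *: G) *m Y *m (1%:M + D *: G)^T =
  Y + D *: (G *m Y) + D *: (Y *m G^T) + (D * D) *: (G *m Y *m G^T).
Proof.
rewrite linearD /= trmx1 linearZ /= mulmxDl mul1mx -scalemxAl.
by rewrite mulmxDr mulmx1 mulmxDl -!scalemxAr -scalemxAl scalerA !addrA.
Qed.


Lemma key_identity (Sg S Y E1 Dm GS SG GZ ZG GY YG GYG dts adv : 'M[R]_d)
  (D W : R) : D != 0 -> W != 0 ->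
  D^-1 *: (S - (Y + D *: GY + D *: YG + (D * D) *: GYG)) = - W^-1 *: (S - 1%:M) ->
  dts + adv - GS - SG = - W^-1 *: (Sg - 1%:M) ->
  GY = GS + GZ -> YG = SG + ZG -> Y - Sg = E1 + Dm -> Dm = - D *: (adv + dts) ->
  (1 + D / W) *: (Sg - S) = - E1 - D *: (GZ + ZG) - (D * D) *: GYG.
Proof.
move=> D0 W0 h1 h2 hGY hYG hZ hDm; apply/matrixP => a b.
move/matrixP/(_ a b): h1; move/matrixP/(_ a b): h2.
move/matrixP/(_ a b): hGY; move/matrixP/(_ a b): hYG.
move/matrixP/(_ a b): hZ; move/matrixP/(_ a b): hDm.
rewrite !mxE.
set one := ((a == b)%:R : R).
move=> hDm hZ hYG hGY h2 h1.
have hy : Y a b = Sg a b + E1 a b + Dm a b by lra.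
apply/eqP; rewrite -subr_eq0; apply/eqP.
transitivity (D * ((dts a b + adv a b - GS a b - SG a b) - (- W^-1 * (Sg a b - one)))
  - D * (D^-1 * (S a b - (Y a b + D * GY a b + D * YG a b + D * D * GYG a b))
      - (- W^-1 * (S a b - one)))).
  rewrite hGY hYG hy hDm; field.
  by apply/andP; split.
by rewrite h1 h2 !subrr.
Qed.

End Alg.

Unset Implicit Arguments.
Set Strict Implicit.

Theorem proposition2 (R : realType) (d m : nat)
  (a : 'I_m -> 'rV[R]_d) (b : 'I_m -> R)
  (T Wi : R) (u : spt R d -> 'rV[R]_d) (sigma : spt R d -> 'M[R]_d) :
  convex_polygonal_domain a b ->
  0 < T -> 0 < Wi ->
  C2 u -> C2 sigma ->
  (* u . n = 0 on the boundary of Omega *)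
  (forall t x, 0 <= t <= T -> cpolyhedron a b x ->
     forall i, dotv (a i) x = b i -> dotv (a i) (u (x, t)) = 0) ->
  (* sigma solves the Oldroyd-B law in Omega x [0,T] *)
  (forall t x, 0 <= t <= T -> polyhedron a b x -> oldroydB Wi u sigma (x, t)) ->
  exists C : R, forall N : nat, (0 < N)%N ->
    let Dt := T / N%:R in
    (* Dt * ||u||_{C^0([0,T]; W^{1,oo}(Omega))} < 1 *)
    (exists M : R, Dt * M < 1 /\
       forall t x, 0 <= t <= T -> polyhedron a b x ->
         `|u (x, t)| <= M /\ `|gradu u (x, t)| <= M) ->
    forall n : nat, (1 <= n <= N)%N ->
      let t := n%:R * Dt in
      forall S : 'rV[R]_d -> 'M[R]_d,
        (forall x, polyhedron a b x ->
           scheme_step Wi u Dt t (fun y => sigma (y, t - Dt)) S x) ->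
        forall x, polyhedron a b x ->
          `|sigma (x, t) - S x| <= C * Dt ^+ 2.
Proof.
move=> [_ [r0 hr0]] T0 Wi0 hu hs _ hold.
pose rho0 := Num.max r0 0 + T.
have [Bu [Bu0 HBu]] := all_bounds hu rho0.
pose K0 := d%:R * Bu + 1.
have K00 : 0 <= K0 by rewrite /K0; have := mulr_ge0 (ler0n R d) Bu0; lra.
pose rho1 := rho0 + T * K0.
have [Bs [Bs0 HBs]] := all_bounds hs rho1.
pose Zb := Bs * T * K0 ^+ 2 + K0 * Bs.
pose C := Bs * K0 ^+ 2 + 2%:R * (d%:R * Bu * Zb) + d%:R * (d%:R * Bu * Bs) * Bu.
exists C => N N0 Dt _ n /andP[n1 nN] t S hS x hx.
have NR : 0 < N%:R :> R by rewrite ltr0n.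
have D0 : 0 < Dt by rewrite /Dt divr_gt0.
have NDt : N%:R * Dt = T by rewrite /Dt mulrC divfK // gt_eqF.
have N1 : 1 <= N%:R :> R by rewrite ler1n.
have n1R : 1 <= n%:R :> R by rewrite ler1n.
have nNR : n%:R <= N%:R :> R by rewrite ler_nat.
have DT : Dt <= T by nra.
have tT : t <= T by rewrite /t; nra.
have tD : Dt <= t by rewrite /t; nra.
have t0 : 0 <= t by lra.
have xr : `|x| <= r0 := hr0 x hx.
pose p : spt R d := (x, t).
have hp : `|p| <= rho0.
  have hm1 : r0 <= Num.max r0 0 by rewrite le_max lexx.
  have hm2 : 0 <= Num.max r0 0 by rewrite le_max lexx orbT.
  rewrite prod_normE ge_max /= (ger0_norm t0) /rho0; apply/andP; split; lra.
pose u0 := u p.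
have hu0 : forall j, `|u0 0 j| <= Bu := fun j => (HBu p hp ord0 ord0 0 j).1.
pose G := gradu u p.
have hG : forall i j, `|G i j| <= Bu.
  move=> i j; rewrite /G /gradu mxE /dx -eb_lift.
  exact: (HBu p hp (lift ord_max j) ord0 0 i).2.1.
have hGn : `|G| <= Bu := norm_le_entries Bu0 hG.
have hGTn : `|G^T| <= Bu by apply: norm_le_entries => // i j; rewrite mxE.
pose w : spt R d := (u0, 1).
pose c := fun l : 'I_d.+1 => - Dt * crd l w.
have hcw : \sum_(l <- index_enum 'I_d.+1) `|crd l w| <= K0.
  rewrite sum_split crd_max /= normr1 /K0 lerD2r.
  under eq_bigr do rewrite crd_lift /=.
  apply: le_trans (ler_sum _ (fun j _ => hu0 j)) _.
  by rewrite sumr_const card_ord mulr_natl.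
pose rr := Dt * K0.
have hc : \sum_(l <- index_enum 'I_d.+1) `|c l| <= rr.
  under eq_bigr do rewrite /c normrM normrN (gtr0_norm D0).
  by rewrite -mulr_sumr /rr ler_wpM2l // ltW.
have rrT : rr <= T * K0 by rewrite /rr ler_wpM2r.
have hin : forall z, `|z - p| <= rr -> `|z| <= rho1.
  move=> z hz; have := ler_normD (z - p) p; rewrite subrK /rho1; lra.
have hsce : `|\sum_(l <- index_enum 'I_d.+1) c l *: eb R l| <= rr.
  apply: le_trans (ler_norm_sum _ _ _) _; apply: le_trans hc.
  apply: ler_sum => l _; rewrite normrZ.
  by apply: ler_piMr => //; apply: eb_norm.
have hp' : p + \sum_(l <- index_enum 'I_d.+1) c l *: eb R l = (yfoot u Dt t x, t - Dt).
  have -> : \sum_(l <- index_enum 'I_d.+1) c l *: eb R l = (- Dt) *: w.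
    rewrite [w in RHS]decomp scaler_sumr; apply: eq_bigr => l _.
    by rewrite /c scalerA.
  rewrite /p /w /yfoot; congr pair => /=.
    by rewrite scaleNr.
  by rewrite [_%:A]mulr1.
pose Y := sigma (yfoot u Dt t x, t - Dt).
pose Sg := sigma p.
pose Dm := \sum_(l <- index_enum 'I_d.+1) c l *: 'D_(eb R l) sigma p.
pose E1 := Y - Sg - Dm.
have hE1 : `|E1| <= Bs * rr ^+ 2.
  apply: norm_le_entries; first by rewrite mulr_ge0 // sqr_ge0.
  move=> a0 b0.
  have hD1 : forall i, 'D_(eb R i) (fun z => sigma z a0 b0) =
      (fun z => ('D_(eb R i) sigma z) a0 b0).
    move=> i; apply/funext => z /=; apply: derive_entry.
    exact: ((hs (eb R i) (eb R i)).1 z).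
  have := @tel2 R _ _ (fun z => sigma z a0 b0) (@eb R d) c Bs (index_enum _)
    (@eb_norm R d) p rr hc.
  rewrite hp' => H.
  have {}H : `|sigma (yfoot u Dt t x, t - Dt) a0 b0 - sigma p a0 b0 -
     \sum_(i <- index_enum 'I_d.+1) c i * 'D_(eb R i) (fun z => sigma z a0 b0) p|
     <= Bs * (\sum_(i <- index_enum 'I_d.+1) `|c i|) ^+ 2.
    apply: H => z i j hz.
    have hzb := HBs z (hin z hz) i j a0 b0.
    split; first exact: derivable_entry ((hs (eb R i) (eb R i)).1 z).
    apply: (@eq_ind _ _ (fun g => derivable g z (eb R j) /\ `|'D_(eb R j) g z| <= Bs)
      _ _ (esym (hD1 i))) => /=.
    split; first exact: derivable_entry ((hs (eb R i) (eb R j)).2.1 z).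
    rewrite derive_entry; first exact: hzb.2.2.
    exact: ((hs (eb R i) (eb R j)).2.1 z).
  have -> : E1 a0 b0 = sigma (yfoot u Dt t x, t - Dt) a0 b0 - sigma p a0 b0 -
     \sum_(i <- index_enum 'I_d.+1) c i * 'D_(eb R i) (fun z => sigma z a0 b0) p.
    rewrite /E1 !mxE summxE; congr (_ - _); apply: eq_bigr => l _.
    by rewrite mxE derive_entry //; exact: ((hs (eb R l) (eb R l)).1 p).
  apply: le_trans H _; apply: ler_wpM2l => //.
  have hs0 : 0 <= \sum_(i <- index_enum 'I_d.+1) `|c i| by apply: sumr_ge0.
  by rewrite !expr2; apply: ler_pM.
have rr0 : 0 <= rr by rewrite /rr mulr_ge0 // ltW.
have hp1 : `|p| <= rho1 by apply: hin; rewrite subrr normr0.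
have hDmn : `|Dm| <= rr * Bs.
  apply: norm_le_entries; first by rewrite mulr_ge0 // /rr mulr_ge0 // ltW.
  move=> a0 b0; rewrite summxE; apply: le_trans (ler_norm_sum _ _ _) _.
  apply: le_trans (_ : _ <= \sum_(l <- index_enum 'I_d.+1) `|c l| * Bs) _.
    apply: ler_sum => l _; rewrite mxE normrM ler_wpM2l //.
    exact: (HBs p hp1 l l a0 b0).2.1.
  by rewrite -mulr_suml ler_wpM2r.
have hDm' : Dm = - Dt *: (advect u sigma p + dt sigma p).
  rewrite /Dm; under eq_bigr do rewrite /c -scalerA.
  rewrite -scaler_sumr.
  suff -> : \sum_i crd i w *: 'D_(eb R i) sigma p = advect u sigma p + dt sigma p by [].
  rewrite sum_split crd_max eb_max scale1r /advect /dt.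
  apply: (congr1 (fun X => X + _)); apply: eq_bigr => j _.
  by rewrite crd_lift eb_lift.
have hYn : `|Y| <= Bs.
  apply: norm_le_entries => // a0 b0.
  have hz : `|(yfoot u Dt t x, t - Dt) - p| <= rr.
    by rewrite -hp' [p + _]addrC addrK.
  exact: (HBs _ (hin _ hz) ord0 ord0 a0 b0).1.
have hSn : `|Sg| <= Bs.
  by apply: norm_le_entries => // a0 b0; exact: (HBs p hp1 ord0 ord0 a0 b0).1.
have hZ : Y - Sg = E1 + Dm by rewrite /E1 subrK.
have hZn : `|Y - Sg| <= Dt * Zb.
  rewrite hZ; apply: le_trans (ler_normD _ _) _.
  have h0 : rr ^+ 2 <= Dt * (T * K0 ^+ 2).
    rewrite /rr exprMn expr2 -mulrA; apply: ler_wpM2l; first exact: ltW.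
    by apply: ler_wpM2r => //; exact: sqr_ge0.
  have := ler_wpM2l Bs0 h0.
  have e : rr * Bs = Dt * (K0 * Bs) by rewrite /rr mulrA.
  rewrite /Zb; lra.
have htT : 0 <= t <= T by rewrite t0 tT.
have h2 := hold t x htT hx.
have hS' := hS x hx.
rewrite /scheme_step /Fdef /= FYF in hS'.
have Dn0 : Dt != 0 by rewrite gt_eqF.
have Wn0 : Wi != 0 by rewrite gt_eqF.
have hGY : G *m Y = G *m Sg + G *m (Y - Sg) by rewrite -mulmxDr addrC subrK.
have hYG : Y *m G^T = Sg *m G^T + (Y - Sg) *m G^T by rewrite -mulmxDl addrC subrK.
have key := @key_identity R d Sg (S x) Y E1 Dm (G *m Sg) (Sg *m G^T)
  (G *m (Y - Sg)) ((Y - Sg) *m G^T) (G *m Y) (Y *m G^T) (G *m Y *m G^T)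
  (dt sigma p) (advect u sigma p) Dt Wi Dn0 Wn0 hS' h2
  hGY hYG hZ hDm'.
change (`|Sg - S x| <= C * Dt ^+ 2).
have hk : 1 <= 1 + Dt / Wi by rewrite lerDl divr_ge0 // ltW.
have e1 : `|Sg - S x| <= `|(1 + Dt / Wi) *: (Sg - S x)|.
  by rewrite mx_normZ (ger0_norm (le_trans ler01 hk)) ler_peMl.
rewrite key in e1.
have nb1 := ler_normB (- E1 - Dt *: (G *m (Y - Sg) + (Y - Sg) *m G^T))
   ((Dt * Dt) *: (G *m Y *m G^T)).
have nb2 := ler_normB (- E1) (Dt *: (G *m (Y - Sg) + (Y - Sg) *m G^T)).
have nb3 := ler_normD (G *m (Y - Sg)) ((Y - Sg) *m G^T).
rewrite normrN mx_normZ (gtr0_norm D0) in nb2.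
rewrite mx_normZ (ger0_norm (mulr_ge0 (ltW D0) (ltW D0))) in nb1.
have dR : 0 <= d%:R :> R by [].
have Zb0 : 0 <= Zb.
  have z1 : 0 <= Bs * T by rewrite mulr_ge0 // ltW.
  have z2 : 0 <= Bs * T * K0 ^+ 2 by rewrite mulr_ge0 // sqr_ge0.
  have z3 : 0 <= K0 * Bs by rewrite mulr_ge0.
  rewrite /Zb; lra.
have m1 : `|G *m (Y - Sg)| <= d%:R * Bu * (Dt * Zb).
  apply: le_trans (mul_norm _ _) _; apply: ler_pM => //;
    try by [rewrite mulr_ge0 | apply: ler_wpM2l].
have m2 : `|(Y - Sg) *m G^T| <= d%:R * Bu * (Dt * Zb).
  apply: le_trans (mul_norm _ _) _.
  rewrite -mulrA [`|Y - Sg| * _]mulrC mulrA.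
  apply: ler_pM => //; try by [rewrite mulr_ge0 | apply: ler_wpM2l].
have gy : `|G *m Y| <= d%:R * Bu * Bs.
  apply: le_trans (mul_norm _ _) _; apply: ler_pM => //;
    try by [rewrite mulr_ge0 | apply: ler_wpM2l].
have m3 : `|G *m Y *m G^T| <= d%:R * (d%:R * Bu * Bs) * Bu.
  apply: le_trans (mul_norm _ _) _; apply: ler_pM => //;
    try by [rewrite mulr_ge0 | apply: ler_wpM2l].
have p1 : Dt * `|G *m (Y - Sg) + (Y - Sg) *m G^T| <=
    Dt * (2%:R * (d%:R * Bu * (Dt * Zb))).
  by apply: ler_wpM2l; [exact: ltW | lra].
have p2 : Dt * Dt * `|G *m Y *m G^T| <= Dt * Dt * (d%:R * (d%:R * Bu * Bs) * Bu).
  by apply: ler_wpM2l => //; rewrite mulr_ge0 // ltW.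
have eC : C * Dt ^+ 2 = Bs * rr ^+ 2 + Dt * (2%:R * (d%:R * Bu * (Dt * Zb)))
    + Dt * Dt * (d%:R * (d%:R * Bu * Bs) * Bu).
  by rewrite /C /rr; ring.
rewrite eC; lra.
Qed.
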